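(* Let $E$ be a dense linear subspace of $\omega$ of countably infinite Hamel dimension. Then there exist a Hamel basis $\{v_n\}_{n\in\mathbb{N}}$ of $E$ and a bijection $\alpha:\mathbb{N}\to\mathbb{N}$ such that $\delta_{\alpha(n)}(v_n)=1$ for all $n\in\mathbb{N}$ and $\delta_{\alpha(k)}(v_n)=0$ whenever $n\in\mathbb{N}$ and $k<n$.
   Context: $\omega=\mathbb{K}^{\mathbb{N}}$ with the product topology, $\mathbb{K}\in\{\mathbb{R},\mathbb{C}\}$; $\delta_n$ denotes the $n$-th coordinate functional, $\delta_n(x)=x_n$. *)

(* Defs.v *)
From Stdlib Require Import Reals.
Open Scope R_scope.

(* A scalar field together with its absolute value (which induces its topology). *)
Record scalars := Scalars {
  car : Type;
  kzero : car;
  kone : car;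
  kadd : car -> car -> car;
  kmul : car -> car -> car;
  kopp : car -> car;
  kabs : car -> R
}.

Definition Kreal : scalars :=
  Scalars R 0 1 Rplus Rmult Ropp Rabs.

(* complex numbers as pairs (re, im) *)
Definition Cadd (z w : R * R) : R * R := (fst z + fst w, snd z + snd w).
Definition Cmul (z w : R * R) : R * R :=
  (fst z * fst w - snd z * snd w, fst z * snd w + snd z * fst w).
Definition Copp (z : R * R) : R * R := (- fst z, - snd z).
Definition Cabs (z : R * R) : R := sqrt (fst z * fst z + snd z * snd z).

Definition Kcomplex : scalars :=
  Scalars (R * R) (0, 0) (1, 0) Cadd Cmul Copp Cabs.

Definition omega (K : scalars) : Type := nat -> car K.

Definition delta {K : scalars} (n : nat) (x : omega K) : car K := x n.

Definition vzero {K : scalars} : omega K := fun _ => kzero K.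
Definition vadd {K : scalars} (x y : omega K) : omega K := fun i => kadd K (x i) (y i).
Definition vscale {K : scalars} (a : car K) (x : omega K) : omega K := fun i => kmul K a (x i).

Definition is_subspace {K : scalars} (E : omega K -> Prop) : Prop :=
  E vzero /\
  (forall x y, E x -> E y -> E (vadd x y)) /\
  (forall a x, E x -> E (vscale a x)).

(* density in the product topology: E meets every basic open neighbourhood
   {y | |y_i - x_i| < eps for all i < N} *)
Definition dense_in_omega {K : scalars} (E : omega K -> Prop) : Prop :=
  forall (x : omega K) (N : nat) (eps : R), 0 < eps ->
    exists e, E e /\
      forall i, (i < N)%nat -> kabs K (kadd K (e i) (kopp K (x i))) < eps.

Fixpoint lincomb {K : scalars} (c : nat -> car K) (v : nat -> omega K) (n : nat)
  : omega K :=
  match n with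
  | O => vzero
  | S m => vadd (lincomb c v m) (vscale (c m) (v m))
  end.

Definition lin_indep {K : scalars} (v : nat -> omega K) : Prop :=
  forall (n : nat) (c : nat -> car K),
    lincomb c v n = vzero -> forall i, (i < n)%nat -> c i = kzero K.

Definition hamel_basis {K : scalars} (E : omega K -> Prop) (v : nat -> omega K) : Prop :=
  (forall n, E (v n)) /\
  lin_indep v /\
  (forall x, E x -> exists (n : nat) (c : nat -> car K), x = lincomb c v n).

(* E has countably infinite Hamel dimension: it has a Hamel basis indexed by N
   (lin_indep forces the family to be injective) *)
Definition countably_infinite_dim {K : scalars} (E : omega K -> Prop) : Prop :=
  exists v : nat -> omega K, hamel_basis E v.

Definition bijective_nat (f : nat -> nat) : Prop :=
  (forall a b, f a = f b -> a = b) /\ (forall m, exists n, f n = m).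

(* Main.v *)
Require Import Defs.
From Stdlib Require Import Reals Lra Lia Psatz Arith Classical ClassicalEpsilon FunctionalExtensionality.
Open Scope R_scope.

Fixpoint nsum (p : nat -> nat) (n : nat) : nat :=
  match n with O => O | S m => (nsum p m + p m)%nat end.
Lemma nsum_ge p n i : (i < n)%nat -> (p i <= nsum p n)%nat.
Proof. induction n; simpl; intros H; [lia|]. destruct (Nat.eq_dec i n); [subst; lia|]. specialize (IHn ltac:(lia)); lia. Qed.

Fixpoint rsum (f : nat -> R) (n : nat) : R :=
  match n with O => 0 | S m => rsum f m + f m end.
Lemma rsum_le f g n : (forall i, (i < n)%nat -> f i <= g i) -> rsum f n <= rsum g n.
Proof. induction n; simpl; intros H; [lra|]. specialize (IHn (fun i Hi => H i ltac:(lia))). specialize (H n ltac:(lia)). lra. Qed.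
Lemma rsum_scale a f n : rsum (fun i => a * f i) n = a * rsum f n.
Proof. induction n; simpl; [ring|]. rewrite IHn; ring. Qed.
Lemma rsum_nonneg f n : (forall i, 0 <= f i) -> 0 <= rsum f n.
Proof. induction n; simpl; intros H; [lra|]. specialize (IHn H). specialize (H n). lra. Qed.

Section Main.
Variable K : scalars.
Hypothesis Kring : ring_theory (kzero K) (kone K) (kadd K) (kmul K) (fun x y => kadd K x (kopp K y)) (kopp K) eq.
Add Ring Kr : Kring.
Hypothesis Kinv : forall x, x <> kzero K -> exists y, kmul K y x = kone K.
Hypothesis abs_nonneg : forall x, 0 <= kabs K x.
Hypothesis abs0 : kabs K (kzero K) = 0.
Hypothesis abs_tri : forall x y, kabs K (kadd K x y) <= kabs K x + kabs K y.
Hypothesis abs_mul : forall x y, kabs K (kmul K x y) = kabs K x * kabs K y.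
Hypothesis abs_m1 : kabs K (kopp K (kone K)) = 1.

Local Notation kz := (kzero K).
Local Notation ko := (kone K).
Local Notation "a +k b" := (kadd K a b) (at level 50, left associativity).
Local Notation "a *k b" := (kmul K a b) (at level 40, left associativity).
Local Notation "-k a" := (kopp K a) (at level 35).

Fixpoint ksum (f : nat -> car K) (n : nat) : car K :=
  match n with O => kz | S m => ksum f m +k f m end.

Definition vsub (x y : omega K) : omega K := vadd x (vscale (-k ko) y).

Lemma lincomb_at (c : nat -> car K) (v : nat -> omega K) n t : lincomb c v n t = ksum (fun i => c i *k v i t) n.
Proof. induction n; [reflexivity|]. cbn [lincomb ksum]. unfold vadd, vscale. rewrite IHn. reflexivity. Qed.

Lemma ksum_zero f n : (forall i, (i < n)%nat -> f i = kz) -> ksum f n = kz.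
Proof. induction n; simpl; intros H; [reflexivity|]. rewrite IHn by (intros; apply H; lia). rewrite H by lia. ring. Qed.

Lemma ksum_single f n j : (j < n)%nat -> (forall i, (i < n)%nat -> i <> j -> f i = kz) -> ksum f n = f j.
Proof.
  induction n; simpl; intros Hj H; [lia|].
  destruct (Nat.eq_dec j n).
  - subst. rewrite ksum_zero by (intros; apply H; lia). ring.
  - rewrite IHn by (try intros; try apply H; lia). rewrite (H n) by lia. ring.
Qed.

Lemma kabs_opp x : kabs K (-k x) = kabs K x.
Proof. replace (-k x) with ((-k ko) *k x) by ring. rewrite abs_mul, abs_m1. ring. Qed.

Lemma kabs_sum f n : kabs K (ksum f n) <= rsum (fun i => kabs K (f i)) n.
Proof. induction n; simpl. rewrite abs0; lra. eapply Rle_trans; [apply abs_tri|]. lra. Qed.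

Lemma lincomb_ext (c c' : nat -> car K) (v v' : nat -> omega K) n : (forall i, (i < n)%nat -> c i = c' i /\ v i = v' i) ->
  lincomb c v n = lincomb c' v' n.
Proof.
  induction n; simpl; intros H; [reflexivity|]. rewrite IHn by (intros; apply H; lia).
  destruct (H n ltac:(lia)) as [-> ->]. reflexivity.
Qed.

Variable E : omega K -> Prop.
Hypothesis HE : is_subspace E.
Hypothesis Hdense : dense_in_omega E.

Lemma E_zero : E vzero. Proof. apply HE. Qed.
Lemma E_add x y : E x -> E y -> E (vadd x y). Proof. apply HE. Qed.
Lemma E_scale a x : E x -> E (vscale a x). Proof. apply HE. Qed.
Lemma E_sub x y : E x -> E y -> E (vsub x y). Proof. intros. apply E_add; auto. apply E_scale; auto. Qed.
Lemma E_lincomb (c : nat -> car K) (v : nat -> omega K) n : (forall i, (i < n)%nat -> E (v i)) -> E (lincomb c v n).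
Proof. induction n; simpl; intros H. apply E_zero. apply E_add. apply IHn; intros; apply H; lia. apply E_scale, H; lia. Qed.

Lemma duals : forall n (p : nat -> nat),
  (forall i j, (i < n)%nat -> (j < n)%nat -> p i = p j -> i = j) ->
  forall j, (j < n)%nat -> exists f, E f /\ f (p j) = ko /\
     forall i, (i < n)%nat -> i <> j -> f (p i) = kz.
Proof.
  induction n; intros p Hp; [intros; lia|].
  assert (IH' : forall j, exists f, (j < n)%nat -> E f /\ f (p j) = ko /\
     forall i, (i < n)%nat -> i <> j -> f (p i) = kz).
  { intro j. destruct (lt_dec j n) as [l|l].
    - destruct (IHn p (fun i j Hi Hj => Hp i j ltac:(lia) ltac:(lia)) j l) as [f Hf]. exists f; auto.
    - exists vzero; intros; lia. }
  pose (F := fun j => proj1_sig (constructive_indefinite_description _ (IH' j))).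
  assert (HF : forall j, (j < n)%nat -> E (F j) /\ F j (p j) = ko /\
     forall i, (i < n)%nat -> i <> j -> F j (p i) = kz).
  { intros j Hj. unfold F. destruct (constructive_indefinite_description _ _) as [f Hf]. simpl; auto. }
  set (S := rsum (fun k => kabs K (F k (p n))) n).
  assert (HS : 0 <= S) by (apply rsum_nonneg; auto).
  set (eps := / (2 * (1 + S))).
  assert (Heps : 0 < eps) by (unfold eps; apply Rinv_0_lt_compat; lra).
  set (x := fun t => if Nat.eqb t (p n) then ko else kz).
  destruct (Hdense x (Datatypes.S (nsum p (Datatypes.S n))) eps Heps) as [e [He Hcl]].
  assert (Hen : kabs K (e (p n) +k -k ko) < eps).
  { specialize (Hcl (p n)). unfold x in Hcl. rewrite Nat.eqb_refl in Hcl. apply Hcl.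
    pose proof (nsum_ge p (Datatypes.S n) n). lia. }
  assert (Hek : forall k, (k < n)%nat -> kabs K (e (p k)) < eps).
  { intros k Hk. specialize (Hcl (p k)). unfold x in Hcl.
    destruct (Nat.eqb_spec (p k) (p n)) as [Hq|Hq].
    - apply Hp in Hq; lia.
    - replace (e (p k)) with (e (p k) +k -k kz) by ring. apply Hcl.
      pose proof (nsum_ge p (Datatypes.S n) k). lia. }
  set (g := vsub e (lincomb (fun k => e (p k)) F n)).
  assert (Hgi : forall i, (i < n)%nat -> g (p i) = kz).
  { intros i Hi. unfold g, vsub, vadd, vscale. rewrite lincomb_at.
    rewrite (ksum_single _ n i Hi).
    - destruct (HF i Hi) as [_ [-> _]]. ring.
    - intros k Hk Hki. destruct (HF k Hk) as [_ [_ H3]]. rewrite H3 by auto. ring. }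
  assert (Hgn : g (p n) <> kz).
  { intro H0. unfold g, vsub, vadd, vscale in H0. rewrite lincomb_at in H0.
    set (Sg := ksum _ n) in H0.
    assert (Heq : (e (p n) +k -k ko) +k -k Sg = -k ko).
    { transitivity ((e (p n) +k (-k ko *k Sg)) +k -k ko); [ring|]. rewrite H0; ring. }
    assert (Hb : kabs K Sg <= eps * S).
    { eapply Rle_trans; [apply kabs_sum|]. unfold S. rewrite <- rsum_scale.
      apply rsum_le. intros i Hi. rewrite abs_mul. apply Rmult_le_compat_r; auto.
      apply Rlt_le, Hek; auto. }
    assert (H1 : 1 <= kabs K (e (p n) +k -k ko) + kabs K Sg).
    { pose proof (abs_tri (e (p n) +k -k ko) (-k Sg)) as T. rewrite Heq, abs_m1, kabs_opp in T. exact T. }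
    assert (H2 : eps * (1 + S) = / 2) by (unfold eps; field; lra).
    nra. }
  destruct (Kinv _ Hgn) as [y Hy].
  set (h := vscale y g).
  intros j Hj. destruct (Nat.eq_dec j n) as [->|Hjn].
  - exists h. split; [apply E_scale, E_sub; auto; apply E_lincomb; intros; apply HF; auto|].
    split; [exact Hy|]. intros i Hi Hin. unfold h, vscale. rewrite Hgi by lia. ring.
  - assert (Hj' : (j < n)%nat) by lia. destruct (HF j Hj') as [HFE [HF1 HF0]].
    assert (HhE : E h) by (apply E_scale, E_sub; auto; apply E_lincomb; intros; apply HF; auto).
    exists (vsub (F j) (vscale (F j (p n)) h)). split; [apply E_sub; auto; apply E_scale; auto|].
    unfold h, vsub, vadd, vscale. unfold vscale in Hy. split.
    + rewrite Hgi by auto. rewrite HF1. ring.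
    + intros i Hi Hij. destruct (Nat.eq_dec i n) as [->|Hin].
      * transitivity (F j (p n) +k -k ko *k (F j (p n) *k (y *k g (p n)))); [reflexivity|].
        rewrite Hy. ring.
      * rewrite Hgi by lia. rewrite HF0 by lia. ring.
Qed.


Definition upd {A : Type} (f : nat -> A) (n : nat) (x : A) : nat -> A :=
  fun i => if Nat.eqb i n then x else f i.

Lemma upd_eq {A : Type} (f : nat -> A) n x : upd f n x n = x.
Proof. unfold upd. rewrite Nat.eqb_refl. reflexivity. Qed.
Lemma upd_neq {A : Type} (f : nat -> A) n x i : i <> n -> upd f n x i = f i.
Proof. intros H. unfold upd. destruct (Nat.eqb_spec i n); congruence. Qed.

Definition Inv n (v : nat -> omega K) (a : nat -> nat) : Prop :=
  (forall k, (k < n)%nat -> E (v k)) /\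
  (forall i k, (i < n)%nat -> (k < n)%nat -> a i = a k -> i = k) /\
  (forall k, (k < n)%nat -> v k (a k) = ko) /\
  (forall i k, (i < k)%nat -> (k < n)%nat -> v k (a i) = kz).

Lemma sep n p q : (forall i j, (i < n)%nat -> (j < n)%nat -> p i = p j -> i = j) ->
  (forall i, (i < n)%nat -> p i <> q) ->
  exists g, E g /\ g q = ko /\ forall i, (i < n)%nat -> g (p i) = kz.
Proof.
  intros Hp Hq.
  destruct (duals (Datatypes.S n) (upd p n q)) with (j := n) as [f [Hf1 [Hf2 Hf3]]].
  - intros i j Hi Hj. destruct (Nat.eq_dec i n) as [->|Hin]; destruct (Nat.eq_dec j n) as [->|Hjn];
      rewrite ?upd_eq, ?upd_neq by auto; auto.
    + intros H; exfalso; apply (Hq j); [lia|auto].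
    + intros H; exfalso; apply (Hq i); [lia|auto].
    + apply Hp; lia.
  - lia.
  - exists f. rewrite upd_eq in Hf2. split; [auto|split; [auto|]].
    intros i Hi. specialize (Hf3 i ltac:(lia) ltac:(lia)). rewrite upd_neq in Hf3 by lia. auto.
Qed.

Lemma inv_extend n v a u q : Inv n v a -> E u -> u q = ko -> (forall i, (i < n)%nat -> u (a i) = kz) ->
  (forall i, (i < n)%nat -> a i <> q) -> Inv (Datatypes.S n) (upd v n u) (upd a n q).
Proof.
  intros [H1 [H2 [H3 H4]]] Hu Huq Hua Hq. split; [|split; [|split]].
  - intros k Hk. destruct (Nat.eq_dec k n) as [->|]; rewrite ?upd_eq, ?upd_neq by auto; auto. apply H1; lia.
  - intros i k Hi Hk. destruct (Nat.eq_dec i n) as [->|Hin]; destruct (Nat.eq_dec k n) as [->|Hkn];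
      rewrite ?upd_eq, ?upd_neq by auto; auto.
    + intros H; exfalso; apply (Hq k); [lia|auto].
    + intros H; exfalso; apply (Hq i); [lia|auto].
    + apply H2; lia.
  - intros k Hk. destruct (Nat.eq_dec k n) as [->|]; rewrite ?upd_eq, ?upd_neq by auto; auto. apply H3; lia.
  - intros i k Hik Hk. rewrite (upd_neq a) by lia. destruct (Nat.eq_dec k n) as [->|]; rewrite ?upd_eq, ?upd_neq by auto.
    + apply Hua; lia.
    + apply H4; lia.
Qed.

Lemma ext_coord n v a q : Inv n v a -> (forall i, (i < n)%nat -> a i <> q) ->
  exists u, Inv (Datatypes.S n) (upd v n u) (upd a n q).
Proof.
  intros HI Hq. destruct (sep n a q) as [g [Hg1 [Hg2 Hg3]]]; auto.
  - apply HI.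
  - exists g. apply inv_extend; auto.
Qed.

Lemma fresh n (a : nat -> nat) : exists q, forall i, (i < n)%nat -> a i <> q.
Proof. exists (Datatypes.S (nsum a n)). intros i Hi. pose proof (nsum_ge a n i Hi). lia. Qed.

Lemma elim n v a x : Inv n v a -> forall m, (m <= n)%nat ->
  exists c, forall i, (i < m)%nat -> vsub x (lincomb c v m) (a i) = kz.
Proof.
  intros [H1 [H2 [H3 H4]]]. induction m; intros Hm.
  - exists (fun _ => kz). intros; lia.
  - destruct (IHm ltac:(lia)) as [c Hc].
    set (r := vsub x (lincomb c v m) (a m)).
    exists (upd c m r). intros i Hi. cbn [lincomb]. unfold vsub, vadd, vscale.
    rewrite (lincomb_ext (upd c m r) c v v m) by (intros; rewrite upd_neq by lia; auto).
    rewrite upd_eq. destruct (Nat.eq_dec i m) as [->|Him].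
    + rewrite H3 by lia. unfold r, vsub, vadd, vscale. ring.
    + rewrite H4 by lia. specialize (Hc i ltac:(lia)). unfold vsub, vadd, vscale in Hc.
      transitivity (x (a i) +k -k ko *k lincomb c v m (a i)); [ring|exact Hc].
Qed.

Definition Span (v : nat -> omega K) n (x : omega K) : Prop :=
  exists c : nat -> car K, x = lincomb c v n.

Lemma ext_vec n v a w : Inv n v a -> E w -> ~ Span v n w ->
  exists u q, Inv (Datatypes.S n) (upd v n u) (upd a n q) /\ Span (upd v n u) (Datatypes.S n) w.
Proof.
  intros HI Hw Hns. destruct (elim n v a w HI n (le_n n)) as [c Hc].
  set (u0 := vsub w (lincomb c v n)) in *.
  destruct (classic (exists t, u0 t <> kz)) as [[t Ht]|Hn].
  2:{ exfalso. apply Hns. exists c. extensionality t.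
      assert (H : u0 t = kz) by (destruct (classic (u0 t = kz)); auto; exfalso; apply Hn; eauto).
      unfold u0, vsub, vadd, vscale in H.
      transitivity ((w t +k -k ko *k lincomb c v n t) +k lincomb c v n t); [ring|]. rewrite H; ring. }
  destruct (Kinv _ Ht) as [y Hy].
  exists (vscale y u0), t. split.
  - apply inv_extend; [exact HI| | exact Hy | |].
    + apply E_scale. unfold u0. apply E_sub; auto. apply E_lincomb. apply HI.
    + intros i Hi. unfold vscale. rewrite Hc by auto. ring.
    + intros i Hi Heq. apply Ht. rewrite <- Heq. apply Hc; auto.
  - exists (upd c n (u0 t)). extensionality t'. cbn [lincomb]. rewrite (lincomb_ext (upd c n (u0 t)) c (upd v n (vscale y u0)) v n) by (intros; rewrite !upd_neq by lia; auto). unfold vadd, vscale.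
    rewrite !upd_eq. unfold vscale.
    transitivity (lincomb c v n t' +k (y *k u0 t) *k u0 t'); [|ring].
    rewrite Hy. unfold u0, vsub, vadd, vscale. ring.
Qed.

Lemma span_upd v n x u : Span v n x -> Span (upd v n u) (Datatypes.S n) x.
Proof.
  intros [c ->]. exists (upd c n kz). extensionality t. cbn [lincomb]. unfold vadd, vscale.
  rewrite (lincomb_ext (upd c n kz) c (upd v n u) v n) by (intros; rewrite !upd_neq by lia; auto).
  rewrite upd_eq. ring.
Qed.

Variable w : nat -> omega K.
Hypothesis HwE : forall j, E (w j).

Definition goal n (v : nat -> omega K) (a : nat -> nat) : Prop :=
  (Nat.even n = true -> Span v (Datatypes.S n) (w (Nat.div2 n))) /\
  (Nat.even n = false -> exists i, (i < Datatypes.S n)%nat /\ a i = Nat.div2 n).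

Lemma step n v a : Inv n v a -> exists u q,
  Inv (Datatypes.S n) (upd v n u) (upd a n q) /\ goal n (upd v n u) (upd a n q).
Proof.
  intros HI. destruct (Nat.even n) eqn:Hev.
  - destruct (classic (Span v n (w (Nat.div2 n)))) as [Hs|Hs].
    + destruct (fresh n a) as [q Hq]. destruct (ext_coord n v a q HI Hq) as [u Hu].
      exists u, q. split; auto. split; intros; [apply span_upd; auto|congruence].
    + destruct (ext_vec n v a (w (Nat.div2 n)) HI (HwE _) Hs) as [u [q [H1 H2]]].
      exists u, q. split; auto. split; intros; [auto|congruence].
  - destruct (classic (exists i, (i < n)%nat /\ a i = Nat.div2 n)) as [[i [Hi Hai]]|Hs].
    + destruct (fresh n a) as [q Hq]. destruct (ext_coord n v a q HI Hq) as [u Hu].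
      exists u, q. split; auto. split; intros; [congruence|]. exists i. split; [lia|].
      rewrite upd_neq by lia. auto.
    + destruct (ext_coord n v a (Nat.div2 n) HI) as [u Hu].
      { intros i Hi Heq. apply Hs. eauto. }
      exists u, (Nat.div2 n). split; auto. split; intros; [congruence|]. exists n. split; [lia|].
      apply upd_eq.
Qed.

Lemma step_fun : exists st : nat -> (nat -> omega K) -> (nat -> nat) -> omega K * nat,
  forall n v a, Inv n v a ->
    Inv (Datatypes.S n) (upd v n (fst (st n v a))) (upd a n (snd (st n v a))) /\
    goal n (upd v n (fst (st n v a))) (upd a n (snd (st n v a))).
Proof.
  assert (H : forall n v a, exists p : omega K * nat, Inv n v a ->
    Inv (Datatypes.S n) (upd v n (fst p)) (upd a n (snd p)) /\
    goal n (upd v n (fst p)) (upd a n (snd p))).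
  { intros n v a. destruct (classic (Inv n v a)) as [HI|HI].
    - destruct (step n v a HI) as [u [q Huq]]. exists (u, q). auto.
    - exists (vzero, O). tauto. }
  exists (fun n v a => proj1_sig (constructive_indefinite_description _ (H n v a))).
  intros n v a HI. destruct (constructive_indefinite_description _ _) as [p Hp]. simpl. auto.
Qed.


Fixpoint build (st : nat -> (nat -> omega K) -> (nat -> nat) -> omega K * nat) (n : nat)
  : (nat -> omega K) * (nat -> nat) :=
  match n with
  | O => (fun _ => vzero, fun _ => O)
  | Datatypes.S m => let p := build st m in let u := st m (fst p) (snd p) in
      (upd (fst p) m (fst u), upd (snd p) m (snd u))
  end.

Lemma tri_indep (V : nat -> omega K) (A : nat -> nat) :
  (forall n, V n (A n) = ko) -> (forall k n, (k < n)%nat -> V n (A k) = kz) -> lin_indep V.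
Proof.
  intros H1 H2 n c Hc.
  assert (Hm : forall m i, (i < m)%nat -> (i < n)%nat -> c i = kz).
  { induction m; intros i Him Hin; [lia|].
    destruct (Nat.eq_dec i m) as [->|]; [|apply IHm; lia].
    pose proof (f_equal (fun f => f (A m)) Hc) as Hc'. simpl in Hc'.
    rewrite lincomb_at in Hc'. unfold vzero in Hc'.
    rewrite (ksum_single _ n m Hin) in Hc'.
    - rewrite H1 in Hc'. rewrite <- Hc'. ring.
    - intros k Hk Hkm. destruct (lt_dec k m).
      + rewrite (IHm k) by lia. ring.
      + rewrite H2 by lia. ring. }
  intros i Hi. apply (Hm (Datatypes.S i)); lia.
Qed.

Lemma lincomb_tail (c : nat -> car K) v n M : (n <= M)%nat -> (forall i, (n <= i < M)%nat -> c i = kz) ->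
  lincomb c v M = lincomb c v n.
Proof.
  induction M; intros HnM Hc.
  - assert (n = O) by lia. subst. reflexivity.
  - destruct (Nat.eq_dec n (Datatypes.S M)) as [->|]; [reflexivity|].
    cbn [lincomb]. rewrite IHM by (try intros; try apply Hc; lia).
    rewrite (Hc M) by lia. extensionality t. unfold vadd, vscale. ring.
Qed.

Lemma span_mono V n M x : Span V n x -> (n <= M)%nat -> Span V M x.
Proof.
  intros [c ->] HnM. exists (fun i => if Nat.ltb i n then c i else kz).
  rewrite (lincomb_tail _ V n M HnM).
  - apply lincomb_ext. intros i Hi. destruct (Nat.ltb_spec i n); [auto|lia].
  - intros i Hi. destruct (Nat.ltb_spec i n); [lia|auto].
Qed.

Lemma span_add V M x y : Span V M x -> Span V M y -> Span V M (vadd x y).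
Proof.
  intros [c ->] [d ->]. exists (fun i => c i +k d i). extensionality t. unfold vadd at 1.
  rewrite !lincomb_at. induction M; simpl; [ring|]. rewrite <- IHM. ring.
Qed.

Lemma span_scale V M a x : Span V M x -> Span V M (vscale a x).
Proof.
  intros [c ->]. exists (fun i => a *k c i). extensionality t. unfold vscale at 1.
  rewrite !lincomb_at. induction M; simpl; [ring|]. rewrite <- IHM. ring.
Qed.

Lemma main_sec : (forall n, E (w n)) -> lin_indep w ->
  (forall x, E x -> exists (n : nat) (c : nat -> car K), x = lincomb c w n) ->
  exists (v : nat -> omega K) (alpha : nat -> nat),
    hamel_basis E v /\ bijective_nat alpha /\
    (forall n, delta (alpha n) (v n) = kone K) /\
    (forall n k, (k < n)%nat -> delta (alpha k) (v n) = kzero K).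
Proof.
  intros _ _ Hspan.
  destruct step_fun as [st Hst].
  assert (Hinv : forall n, Inv n (fst (build st n)) (snd (build st n))).
  { induction n.
    - repeat split; intros; lia.
    - simpl. apply Hst. auto. }
  assert (Hgoal : forall n, goal n (fst (build st (Datatypes.S n))) (snd (build st (Datatypes.S n)))).
  { intros n. simpl. apply Hst. auto. }
  assert (Hstab : forall d k n, (k < n)%nat -> fst (build st (n + d)) k = fst (build st n) k /\
                                    snd (build st (n + d)) k = snd (build st n) k).
  { induction d; intros k n Hk. - rewrite Nat.add_0_r. auto.
    - rewrite Nat.add_succ_r. simpl. rewrite !upd_neq by lia. apply IHd; auto. }
  set (V := fun k => fst (build st (Datatypes.S k)) k).
  set (A := fun k => snd (build st (Datatypes.S k)) k).
  assert (HVA : forall k n, (k < n)%nat -> V k = fst (build st n) k /\ A k = snd (build st n) k).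
  { intros k n Hk. replace n with (Datatypes.S k + (n - Datatypes.S k))%nat by lia.
    destruct (Hstab (n - Datatypes.S k)%nat k (Datatypes.S k) ltac:(lia)) as [H1 H2].
    unfold V, A. rewrite H1, H2. auto. }
  assert (Hone : forall n, V n (A n) = ko).
  { intros n. destruct (Hinv (Datatypes.S n)) as [_ [_ [H3 _]]]. apply H3. lia. }
  assert (Hzero : forall n k, (k < n)%nat -> V n (A k) = kz).
  { intros n k Hk. destruct (HVA k (Datatypes.S n) ltac:(lia)) as [_ ->].
    destruct (Hinv (Datatypes.S n)) as [_ [_ [_ H4]]]. apply H4; lia. }
  assert (Hwspan : forall j, Span V (Datatypes.S (2 * j)) (w j)).
  { intros j. destruct (Hgoal (2 * j)%nat) as [G _].
    rewrite Nat.div2_double in G. destruct (G (Nat.even_even j)) as [c Hc].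
    exists c. rewrite Hc. apply lincomb_ext. intros i Hi. split; auto.
    symmetry. apply HVA. auto. }
  exists V, A. split; [|split; [|split]].
  - split; [|split].
    + intros n. destruct (Hinv (Datatypes.S n)) as [H1 _]. apply H1. lia.
    + apply (tri_indep V A); auto.
    + intros x Hx. destruct (Hspan x Hx) as [N [d ->]].
      assert (HN : exists M, Span V M (lincomb d w N)).
      { clear Hx. induction N.
        - exists O. exists (fun _ => kz). reflexivity.
        - destruct IHN as [M HM]. exists (Nat.max M (Datatypes.S (2 * N))). cbn [lincomb].
          apply span_add.
          + apply (span_mono V M); auto; lia.
          + apply span_scale. apply (span_mono V (Datatypes.S (2 * N))); auto; lia. }
      destruct HN as [M [c Hc]]. exists M, c. auto.
  - split.
    + intros a b Hab. destruct (HVA a (Datatypes.S (a + b)) ltac:(lia)) as [_ Ha].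
      destruct (HVA b (Datatypes.S (a + b)) ltac:(lia)) as [_ Hb].
      destruct (Hinv (Datatypes.S (a + b))) as [_ [H2 _]]. apply H2; [lia|lia|congruence].
    + intros m. destruct (Hgoal (2 * m + 1)%nat) as [_ G].
      rewrite Nat.div2_odd' in G. destruct (G (Nat.even_odd m)) as [i [Hi Hai]].
      exists i. destruct (HVA i _ Hi) as [_ ->]. auto.
  - intros n. apply Hone.
  - intros n k Hk. apply Hzero. auto.
Qed.

End Main.
Lemma Rring_ok : ring_theory 0 1 Rplus Rmult (fun x y => x + - y) Ropp (@eq R).
Proof. constructor; intros; ring. Qed.

Lemma Cring_ok : ring_theory (0,0) (1,0) Cadd Cmul (fun x y => Cadd x (Copp y)) Copp (@eq (R*R)).
Proof.
  constructor; intros; repeat match goal with p : (R*R)%type |- _ => destruct p end;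
  unfold Cadd, Cmul, Copp; simpl; f_equal; ring.
Qed.

Lemma Cinv_ok : forall x : R*R, x <> (0,0) -> exists y, Cmul y x = (1,0).
Proof.
  intros [a b] H. assert (Hn : a*a + b*b <> 0).
  { intro H0. apply H. assert (a = 0) by nra. assert (b = 0) by nra. subst; auto. }
  exists (a / (a*a+b*b), - b / (a*a+b*b)). unfold Cmul; simpl. f_equal; field; auto.
Qed.

Lemma Cabs_nonneg x : 0 <= Cabs x. Proof. apply sqrt_pos. Qed.
Lemma Cabs0 : Cabs (0,0) = 0. Proof. unfold Cabs; simpl. replace (0*0+0*0) with 0 by ring. apply sqrt_0. Qed.
Lemma Cabs_m1 : Cabs (Copp (1,0)) = 1.
Proof. unfold Cabs, Copp; simpl. assert (E1 : forall z, z = 1 -> sqrt z = 1) by (intros; subst; apply sqrt_1). apply E1. ring. Qed.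
Lemma Cabs_mul x y : Cabs (Cmul x y) = Cabs x * Cabs y.
Proof.
  destruct x as [a b], y as [c d]. unfold Cabs, Cmul; simpl.
  rewrite <- sqrt_mult by nra. f_equal. ring.
Qed.
Lemma Cabs_tri x y : Cabs (Cadd x y) <= Cabs x + Cabs y.
Proof.
  destruct x as [a b], y as [c d]. unfold Cabs, Cadd; simpl.
  set (A := a*a+b*b). set (B := c*c+d*d).
  assert (HA : 0 <= A) by (unfold A; nra). assert (HB : 0 <= B) by (unfold B; nra).
  pose proof (sqrt_sqrt A HA). pose proof (sqrt_sqrt B HB).
  pose proof (sqrt_pos A). pose proof (sqrt_pos B).
  assert (Hk : a*c+b*d <= sqrt A * sqrt B).
  { assert (HAB : (a*c+b*d)*(a*c+b*d) <= (sqrt A * sqrt B) * (sqrt A * sqrt B)).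
    { replace ((sqrt A * sqrt B) * (sqrt A * sqrt B)) with (A * B) by nra.
      assert (HL : A*B - (a*c+b*d)*(a*c+b*d) = (a*d-b*c)*(a*d-b*c)) by (unfold A, B; ring). pose proof (Rle_0_sqr (a*d-b*c)). unfold Rsqr in *. lra. }
    apply Rsqr_incr_0_var; [unfold Rsqr; exact HAB| apply Rmult_le_pos; assumption]. }
  rewrite <- (sqrt_pow2 (sqrt A + sqrt B)) by lra. apply sqrt_le_1_alt.
  unfold A, B in *. nra.
Qed.

Theorem lemma3p5 (K : scalars) (HK : K = Kreal \/ K = Kcomplex)
  (E : omega K -> Prop) (HE : is_subspace E) (Hdense : dense_in_omega E)
  (Hdim : countably_infinite_dim E) :
  exists (v : nat -> omega K) (alpha : nat -> nat),
    hamel_basis E v /\ bijective_nat alpha /\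
    (forall n, delta (alpha n) (v n) = kone K) /\
    (forall n k, (k < n)%nat -> delta (alpha k) (v n) = kzero K).
Proof.
  destruct Hdim as [w [Hw1 [Hw2 Hw3]]].
  destruct HK as [-> | ->].
  - apply (main_sec Kreal Rring_ok) with (w := w); auto; simpl.
    + intros x Hx. exists (/ x). field. auto.
    + intros x. apply Rabs_pos.
    + apply Rabs_R0.
    + intros. apply Rabs_triang.
    + intros. apply Rabs_mult.
    + rewrite Rabs_Ropp. apply Rabs_R1.
  - apply (main_sec Kcomplex Cring_ok) with (w := w); auto; simpl.
    + exact Cinv_ok.
    + exact Cabs_nonneg.
    + exact Cabs0.
    + exact Cabs_tri.
    + exact Cabs_mul.
    + exact Cabs_m1.
Qed.
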